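(* Let $(X,d_X)$ be a metric space. If $C<1$ and $D\in[0,\infty)$ are such that $\Delta_X^{(c)}(R)\leq CR+D$ for all $R\in[0,\infty)$, then $\mathrm{diam}(X)\leq\frac{D}{1-C}$.
   Context: For a cover $\mathcal{U}$ of $X$: $\mathrm{diam}(\mathcal{U})=\sup_{U\in\mathcal{U}}\mathrm{diam}(U)$; $\mathcal{L}(\mathcal{U})=\sup\{d\in[0,\infty): \text{every } E\subseteq X \text{ with } \mathrm{diam}(E)<d \text{ is contained in some } U\in\mathcal{U}\}$; point-finite means each point lies in only finitely many members. $\Delta_X^{(c)}(R)=\inf\{\mathrm{diam}(\mathcal{U}): \mathcal{U} \text{ point-finite cover of } X,\ \mathcal{L}(\mathcal{U})\geq R\}$. *)

(* Defs.v *)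
From mathcomp Require Import all_boot all_order all_algebra.
From mathcomp Require Import all_classical all_reals ereal.
Set Implicit Arguments. Unset Strict Implicit. Unset Printing Implicit Defensive.
Import Order.TTheory GRing.Theory Num.Theory.
Local Open Scope classical_set_scope.
Local Open Scope ring_scope.

Section Defs.
Context {R : realType} {T : Type}.

Definition is_metric (d : T -> T -> R) : Prop :=
  (forall x y, 0 <= d x y) /\
  (forall x y, d x y = 0 <-> x = y) /\
  (forall x y, d x y = d y x) /\
  (forall x y z, d x z <= d x y + d y z).

(* diameter of a subset, in [0, +oo]; convention diam(empty) = 0 *)
Definition mdiam (d : T -> T -> R) (E : set T) : \bar R :=
  ereal_sup ([set (d x y)%:E | x in E & y in E] `|` [set 0%E]).

Definition cover_diam (d : T -> T -> R) (U : set (set T)) : \bar R :=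
  ereal_sup ([set mdiam d A | A in U] `|` [set 0%E]).

Definition lebesgue_number (d : T -> T -> R) (U : set (set T)) : \bar R :=
  ereal_sup [set r%:E | r in [set r : R | 0 <= r /\
      forall E : set T, (mdiam d E < r%:E)%E -> exists2 A, U A & E `<=` A]].

Definition is_cover (U : set (set T)) : Prop := forall x : T, exists2 A, U A & A x.

Definition point_finite (U : set (set T)) : Prop :=
  forall x : T, finite_set [set A | U A /\ A x].

Definition Delta_c (d : T -> T -> R) (r : R) : \bar R :=
  ereal_inf [set cover_diam d U | U in [set U : set (set T) |
     is_cover U /\ point_finite U /\ (r%:E <= lebesgue_number d U)%E]].
End Defs.

(* Main.v *)
Require Import Defs.
From mathcomp Require Import all_boot all_order all_algebra.
From mathcomp Require Import all_classical all_reals ereal.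
From mathcomp Require Import lra.
Import Order.TTheory GRing.Theory Num.Theory.
Local Open Scope classical_set_scope.
Local Open Scope ring_scope.

Lemma key {R : realType} {T : Type} (d : T -> T -> R)
  (hd : is_metric d) (x y : T) (r : R) : d x y < r ->
  ((d x y)%:E <= Delta_c d r)%E.
Proof.
move: hd => [h0 [hxx [hs ht]]] hr.
apply: le_ereal_inf_tmp => _ [U [_ [_ hleb]] <-].
have : ((d x y)%:E < lebesgue_number d U)%E.
  by apply: (lt_le_trans _ hleb); rewrite lte_fin.
move=> /ereal_sup_gt [_ [r' [hr'0 hP] <-]]; rewrite lte_fin => hr'.
have [|A UA EA] := hP [set z | z = x \/ z = y].
  apply: (le_lt_trans _ (_ : (d x y)%:E < r'%:E)%E); last by rewrite lte_fin.
  apply: ge_ereal_sup => _ [[a Ha [b Hb <-]]|->]; last by rewrite lee_fin h0.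
  rewrite lee_fin.
  case: Ha => ->; case: Hb => ->.
  - by have -> : d x x = 0 by apply/hxx.
  - by [].
  - by rewrite hs.
  - by have -> : d y y = 0 by apply/hxx.
apply: (@le_trans _ _ (mdiam d A)).
  apply: ereal_sup_ubound; left; exists x; first by apply: EA; left.
  by exists y => //; apply: EA; right.
apply: ereal_sup_ubound; left; by exists A.
Qed.

Theorem lemma3p5 (R : realType) (T : Type) (d : T -> T -> R)
  (hd : is_metric d) (C D : R) (hC : C < 1) (hD : 0 <= D)
  (hDelta : forall r : R, 0 <= r -> (Delta_c d r <= (C * r + D)%:E)%E) :
  (mdiam d [set: T] <= (D / (1 - C))%:E)%E.
Proof.
have hC1 : 0 < 1 - C by rewrite subr_gt0.
apply: ge_ereal_sup => _ [[x _ [y _ <-]]|->]; last first.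
  by rewrite lee_fin divr_ge0 // ltW.
rewrite lee_fin ler_pdivlMr //.
have h0 : 0 <= d x y by case: hd.
apply/ler_addgt0Pr => e he.
set eps := e / (`|C| + 1).
have heps : 0 < eps by rewrite divr_gt0 // ltr_wpDl.
have H := le_trans (@key _ _ d hd _ _ _ (ltr_pwDr heps (lexx (d x y))))
  (hDelta (d x y + eps) (addr_ge0 h0 (ltW heps))).
rewrite lee_fin in H.
have hCe : C * eps <= e.
  rewrite /eps mulrA ler_pdivrMr ?ltr_wpDl //.
  have h1 : C * e <= `|C| * e by apply: ler_wpM2r; [exact: ltW | exact: ler_norm].
  by apply: (le_trans h1); rewrite mulrDr mulr1 mulrC lerDl ltW.
rewrite mulrBr mulr1 mulrC.
move: H; rewrite mulrDr => H.
clearbody eps. lra.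
Qed.
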